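(* Let $\mathcal{M}=(E,\rho)$ be a $q$-matroid and $V$ a subspace of $E$. Then $V$ is independent if and only if $\dim(V\cap Z)\le\rho(Z)$ for all $Z\in\mathcal{Z}(\mathcal{M})$. Consequently, the cyclic flats of $\mathcal{M}$ together with their rank values determine the collection of independent spaces and hence the $q$-matroid $\mathcal{M}$.
   Context: Let $\mathbb{F}=\mathbb{F}_q$, $E$ a finite-dimensional $\mathbb{F}$-vector space. A $q$-matroid is $\mathcal{M}=(E,\rho)$ with $\rho$ from subspaces of $E$ to $\mathbb{Z}_{\ge0}$ satisfying $0\le\rho(V)\le\dim V$, monotonicity, and submodularity $\rho(V+W)+\rho(V\cap W)\le\rho(V)+\rho(W)$. $V$ is independent if $\rho(V)=\dim V$. A flat is $F$ with $\rho(F+\langle x\rangle)>\rho(F)$ for all $x\in E\setminus F$. The cyclic core is $\mathrm{cyc}(V)=\{x\in V\mid\rho(W)=\rho(V)\text{ for all }W\le V\text{ with }W+\langle x\rangle=V\}$; $V$ is cyclic if $\mathrm{cyc}(V)=V$. $\mathcal{Z}(\mathcal{M})$ is the set of cyclic flats (subspaces that are both flats and cyclic). *)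

(* Defs.v *)
From HB Require Import structures.
From mathcomp Require Import all_boot all_order all_algebra all_field.
Set Implicit Arguments. Unset Strict Implicit. Unset Printing Implicit Defensive.
Import GRing.Theory.
Local Open Scope ring_scope.

Section QMatroid.
Variables (F : finFieldType) (E : vectType F).

Definition qmatroid (rho : {vspace E} -> nat) : Prop :=
  [/\ (forall V : {vspace E}, (rho V <= \dim V)%N),
      (forall V W : {vspace E}, (V <= W)%VS -> (rho V <= rho W)%N) &
      (forall V W : {vspace E},
          (rho (V + W)%VS + rho (V :&: W)%VS <= rho V + rho W)%N)].

Definition independent (rho : {vspace E} -> nat) (V : {vspace E}) : Prop :=
  rho V = \dim V.

Definition flat (rho : {vspace E} -> nat) (Fl : {vspace E}) : Prop :=
  forall x : E, x \notin Fl -> (rho Fl < rho (Fl + <[x]>)%VS)%N.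

Definition in_cyc (rho : {vspace E} -> nat) (V : {vspace E}) (x : E) : Prop :=
  x \in V /\
  (forall W : {vspace E}, (W <= V)%VS -> (W + <[x]>)%VS = V -> rho W = rho V).

Definition cyclic (rho : {vspace E} -> nat) (V : {vspace E}) : Prop :=
  forall x : E, in_cyc rho V x <-> x \in V.

Definition cyclic_flat (rho : {vspace E} -> nat) (Z : {vspace E}) : Prop :=
  flat rho Z /\ cyclic rho Z.

End QMatroid.

(* Main.v *)
Require Import Defs.
From HB Require Import structures.
From mathcomp Require Import all_boot all_order all_algebra all_field.
From mathcomp Require Import zify.
From Stdlib Require Import Classical.
Set Implicit Arguments. Unset Strict Implicit. Unset Printing Implicit Defensive.
Import GRing.Theory.

Lemma ex_maxP (T : Type) (P : T -> Prop) (g : T -> nat) (B : nat) :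
  (exists t, P t) -> (forall t, P t -> g t <= B) ->
  exists t, P t /\ forall u, P u -> g u <= g t.
Proof.
move=> [t0 Pt0] Hb; apply: NNPP => Hn.
have H : forall n, exists t, P t /\ n <= g t.
  elim=> [|n [t [Pt Hnt]]]; first by exists t0.
  have : ~ (forall u, P u -> g u <= g t) by move=> Hu; apply: Hn; exists t.
  move/not_all_ex_not => [u Hu]; have [Pu /negP] := imply_to_and _ _ Hu.
  rewrite -ltnNge => lt; exists u; split=> //; exact: leq_ltn_trans Hnt lt.
have [t [Pt Ht]] := H B.+1; have := Hb t Pt; lia.
Qed.

Lemma ex_minP (T : Type) (P : T -> Prop) (g : T -> nat) :
  (exists t, P t) -> exists t, P t /\ forall u, P u -> g t <= g u.
Proof.
move=> [t0 Pt0]; apply: NNPP => Hn.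
have H : forall n t, P t -> n <= g t.
  elim=> [//|n IH] t Pt; have := IH t Pt; rewrite leq_eqVlt => /orP [/eqP E|//].
  exfalso; apply: Hn; exists t; split=> // u Pu; rewrite -E; exact: IH.
have := H (g t0).+1 t0 Pt0; lia.
Qed.

Section Aux.
Variables (F : finFieldType) (E : vectType F).
Implicit Types (rho : {vspace E} -> nat).

Lemma rho_dim rho : qmatroid rho -> forall V, rho V <= \dim V.
Proof. by case. Qed.
Lemma rho_mono rho : qmatroid rho -> forall V W, (V <= W)%VS -> rho V <= rho W.
Proof. by case. Qed.
Lemma rho_sub rho : qmatroid rho -> forall V W,
  rho (V + W)%VS + rho (V :&: W)%VS <= rho V + rho W.
Proof. by case. Qed.
Lemma rho0 rho : qmatroid rho -> rho 0%VS = 0%N.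
Proof. move=> H; have := rho_dim H 0%VS; rewrite dimv0; lia. Qed.

Lemma rank_gap rho : qmatroid rho -> forall U Y : {vspace E}, (U <= Y)%VS ->
  rho Y + \dim U <= rho U + \dim Y.
Proof.
move=> H U Y sUY.
have e1 : ((Y :\: U) + U)%VS = Y by rewrite addv_diff; apply/addv_idPl.
have h := rho_sub H (Y :\: U) U; rewrite e1 capv_diff rho0 // in h.
have hd := dimv_sum_cap (Y :\: U) U; rewrite e1 capv_diff dimv0 in hd.
have := rho_dim H (Y :\: U); lia.
Qed.

Lemma indep_sub rho : qmatroid rho -> forall U V : {vspace E},
  independent rho V -> (U <= V)%VS -> independent rho U.
Proof.
move=> H U V iV sUV; rewrite /independent in iV *.
have := rank_gap H sUV; have := rho_dim H U; lia.
Qed.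

Lemma dim_addline (W : {vspace E}) (x : E) : x \notin W ->
  \dim (W + <[x]>)%VS = (\dim W).+1.
Proof.
move=> xW.
have x0 : x != 0%R by apply: contraNneq xW => ->; exact: mem0v.
have h1 := dimv_sum_cap W <[x]>; rewrite dim_vline x0 in h1.
have [Hle Heq] := dimv_leqif_sup (addvSl W <[x]>).
have nsub : ~~ (W + <[x]> <= W)%VS.
  apply: contra xW => /subvP s; apply: s; move/subvP: (addvSr W <[x]>); apply.
  exact: memv_line.
rewrite -Heq in nsub; move: nsub Hle h1 => /eqP; lia.
Qed.

Lemma part1 rho : qmatroid rho -> forall V : {vspace E},
  independent rho V <->
  (forall Z : {vspace E}, cyclic_flat rho Z -> (\dim (V :&: Z)%VS <= rho Z)%N).
Proof.
move=> H V; split.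
  move=> iV Z _; have := indep_sub H iV (capvSl V Z); rewrite /independent => <-.
  exact: rho_mono H _ _ (capvSr V Z).
move=> HV; rewrite /independent; apply: NNPP => Hneq.
have HVlt : rho V < \dim V by have := rho_dim H V; lia.
pose N := \dim (fullv : {vspace E}).
have HN : forall Z : {vspace E}, rho Z <= N.
  move=> Z; apply: leq_trans (rho_dim H Z) _; exact: dimvS (subvf Z).
have HdN : forall Z : {vspace E}, \dim Z <= N by move=> Z; exact: dimvS (subvf Z).
pose g (Z : {vspace E}) := (\dim (V :&: Z) + (N - rho Z))%N.
pose maxi Z := forall u, g u <= g Z.
have [Zm [_ Hm]] := @ex_maxP _ (fun _ => True) g (N + N) (ex_intro _ V I)
   (fun Z _ => ltac:(rewrite /g; have := HdN (V :&: Z)%VS; lia)).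
have gV : N < g V by rewrite /g capvv; have := HN V; lia.
have key : forall Z, maxi Z -> rho Z < \dim (V :&: Z).
  move=> Z mZ; have := mZ V; move: gV; rewrite /g; have := HN Z; have := HN V; lia.
have mtr : forall Z Z', maxi Z -> g Z <= g Z' -> maxi Z'.
  by move=> Z Z' mZ le u; apply: leq_trans (mZ u) le.
have [Z1 [mZ1 HZ1]] := @ex_maxP _ maxi (fun Z => \dim Z) N (ex_intro _ Zm (fun u => Hm u I))
   (fun Z _ => HdN Z).
have flat1 : flat rho Z1.
  move=> x Hx; rewrite ltnNge; apply/negP => Hle.
  have hm := rho_mono H (addvSl Z1 <[x]>).
  have hd := dimvS (capvS (subvv V) (addvSl Z1 <[x]>)).
  have mx : maxi (Z1 + <[x]>)%VS by apply: (mtr _ _ mZ1); rewrite /g; lia.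
  have := HZ1 _ mx; rewrite dim_addline //; lia.
have [Z [[fZ mZ] HZ]] := @ex_minP _ (fun Z => flat rho Z /\ maxi Z)
   (fun Z => \dim Z) (ex_intro _ Z1 (conj flat1 mZ1)).
have cycZ : cyclic rho Z.
  move=> x; split; first by case.
  move=> xZ; split=> // W sWZ eWZ; apply: NNPP => Hne.
  have ltW : rho W < rho Z by have := rho_mono H sWZ; lia.
  have xW : x \notin W.
    apply/negP => xW; have e : (W + <[x]>)%VS = W by apply/addv_idPl; rewrite -memvE.
    by move: ltW; rewrite -eWZ e ltnn.
  have dimZ : \dim Z = (\dim W).+1 by rewrite -eWZ dim_addline.
  have rk := rank_gap H sWZ.
  have hs := dimv_sum_cap (V :&: Z) W.
  have h2 : \dim (V :&: Z + W)%VS <= \dim Z.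
    by apply: dimvS; rewrite subv_add capvSr sWZ.
  have h3 : \dim (V :&: Z :&: W)%VS <= \dim (V :&: W).
    by apply: dimvS; apply: capvS (capvSl V Z) (subvv W).
  have mW : maxi W by apply: (mtr _ _ mZ); rewrite /g; have := HN W; have := HN Z; lia.
  have [Y [[sWY rY] HY]] := @ex_maxP _ (fun Y => (W <= Y)%VS /\ rho Y = rho W)
     (fun Y => \dim Y) N (ex_intro _ W (conj (subvv W) erefl)) (fun Y _ => HdN Y).
  have fY : flat rho Y.
    move=> y yY; rewrite ltnNge; apply/negP => Hle.
    have hm := rho_mono H (addvSl Y <[y]>).
    have ey : rho (Y + <[y]>)%VS = rho W by lia.
    have := HY (Y + <[y]>)%VS (conj (subv_trans sWY (addvSl Y <[y]>)) ey).
    rewrite dim_addline //; lia.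
  have mY : maxi Y.
    apply: (mtr _ _ mW); rewrite /g rY.
    have := dimvS (capvS (subvv V) sWY); lia.
  have sYZ : (Y <= Z)%VS.
    apply: NNPP => nYZ; have /subvPn [y yY yZ] : ~~ (Y <= Z)%VS by apply/negP.
    have h1 := fZ y yZ.
    have h4 : rho (Z + <[y]>)%VS <= rho (Y + Z)%VS.
      apply: rho_mono H _ _ _; rewrite subv_add addvSr /=.
      apply: subv_trans (addvSl Y Z); by rewrite -memvE.
    have h5 := rho_sub H Y Z.
    have h6 : rho W <= rho (Y :&: Z)%VS by apply: rho_mono H _ _ _; rewrite subv_cap sWY sWZ.
    lia.
  have [hle heq] := dimv_leqif_eq sYZ.
  have nYZ : Y != Z by apply/eqP => e; move: ltW; rewrite -e rY ltnn.
  rewrite -heq in nYZ.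
  have := HZ Y (conj fY mY); move: nYZ hle => /eqP; lia.
have := key Z mZ; have := HV Z (conj fZ cycZ); lia.
Qed.

Lemma exists_basis rho : qmatroid rho -> forall V : {vspace E},
  exists I : {vspace E}, [/\ (I <= V)%VS, independent rho I & rho V = \dim I].
Proof.
move=> H V.
pose N := \dim (fullv : {vspace E}).
have HdN : forall Z : {vspace E}, \dim Z <= N by move=> Z; exact: dimvS (subvf Z).
have i0 : independent rho 0%VS by rewrite /independent rho0 // dimv0.
have [I [[sIV iI] HI]] := @ex_maxP _ (fun I => (I <= V)%VS /\ independent rho I)
  (fun I => \dim I) N (ex_intro _ 0%VS (conj (sub0v V) i0)) (fun Z _ => HdN Z).
have [Y [[sIY [sYV rY]] HY]] := @ex_maxP _
  (fun Y => (I <= Y)%VS /\ ((Y <= V)%VS /\ rho Y = rho I))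
  (fun Y => \dim Y) N (ex_intro _ I (conj (subvv I) (conj sIV erefl)))
  (fun Z _ => HdN Z).
exists I; split=> //.
suff eYV : Y = V by rewrite -eYV rY iI.
apply: NNPP => ne.
have /subvPn [x xV xY] : ~~ (V <= Y)%VS.
  by apply/negP => sVY; apply: ne; apply/eqP; rewrite eqEsubv sYV sVY.
have lt1 : rho Y < rho (Y + <[x]>)%VS.
  rewrite ltnNge; apply/negP => Hle.
  have hm := rho_mono H (addvSl Y <[x]>).
  have sYxV : (Y + <[x]> <= V)%VS by rewrite subv_add sYV -memvE.
  have ex : rho (Y + <[x]>)%VS = rho I by lia.
  have := HY (Y + <[x]>)%VS (conj (subv_trans sIY (addvSl Y <[x]>)) (conj sYxV ex)).
  rewrite dim_addline //; lia.
have h1 := rho_sub H Y (I + <[x]>)%VS.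
have h2 : rho (Y + <[x]>)%VS <= rho (Y + (I + <[x]>))%VS.
  by apply: rho_mono H _ _ _; apply: addvS (subvv Y) (addvSr I <[x]>).
have h3 : rho I <= rho (Y :&: (I + <[x]>))%VS.
  by apply: rho_mono H _ _ _; rewrite subv_cap sIY addvSl.
have xI : x \notin I by apply: contra xY; move/subvP: sIY; apply.
have dI := dim_addline xI.
have h4 := rho_dim H (I + <[x]>)%VS.
have iIx : independent rho (I + <[x]>)%VS by rewrite /independent; move: iI; rewrite /independent; lia.
have sIxV : (I + <[x]> <= V)%VS by rewrite subv_add sIV -memvE.
have := HI _ (conj sIxV iIx); lia.
Qed.

End Aux.

Theorem theorem4p5 (F : finFieldType) (E : vectType F)
    (rho : {vspace E} -> nat) (Hrho : qmatroid rho) :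
  (forall V : {vspace E},
      independent rho V <->
      (forall Z : {vspace E}, cyclic_flat rho Z -> (\dim (V :&: Z)%VS <= rho Z)%N))
  /\
  (forall rho' : {vspace E} -> nat, qmatroid rho' ->
      (forall Z : {vspace E}, cyclic_flat rho Z <-> cyclic_flat rho' Z) ->
      (forall Z : {vspace E}, cyclic_flat rho Z -> rho Z = rho' Z) ->
      (forall V : {vspace E}, independent rho V <-> independent rho' V) /\
      (forall V : {vspace E}, rho V = rho' V)).
Proof.
split; first exact: part1.
move=> rho' Hrho' HZ Hr.
have Ieq : forall V : {vspace E}, independent rho V <-> independent rho' V.
  move=> V; split=> iV.
    apply: (proj2 (part1 Hrho' V)) => Z cfZ'; have cfZ := (proj2 (HZ Z)) cfZ'.
    rewrite -(Hr Z cfZ); exact: (proj1 (part1 Hrho V)) iV Z cfZ.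
  apply: (proj2 (part1 Hrho V)) => Z cfZ; have cfZ' := (proj1 (HZ Z)) cfZ.
  rewrite (Hr Z cfZ); exact: (proj1 (part1 Hrho' V)) iV Z cfZ'.
split=> // V.
have [I [sIV iI eI]] := exists_basis Hrho V.
have [J [sJV iJ eJ]] := exists_basis Hrho' V.
have iI' := proj1 (Ieq I) iI; have iJ' := proj2 (Ieq J) iJ.
have h1 := rho_mono Hrho' sIV; have h2 := rho_mono Hrho sJV.
rewrite /independent in iI' iJ'; lia.
Qed.
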